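(* Let $n\ge3$. For real coefficients $c^{lm}_{ij}$ ($1\le i,j,l,m\le n$) with $c^{lm}_{ij}=c^{lm}_{ji}$, consider the homogeneous linear system in the $n^2$ unknowns $b^k_s$ ($1\le k,s\le n$) consisting of the equations $$(c^{lk}_{ij}-c^{li}_{kj})b^k_p+(c^{lp}_{kj}-c^{lk}_{pj})b^k_i+(c^{ki}_{pj}-c^{kp}_{ij})b^l_k+(c^{lp}_{ik}-c^{li}_{pk})b^k_j=0$$ for all $1\le i<p\le n$ and all $1\le j,l\le n$ (summation over the repeated index $k$ from $1$ to $n$). Then there exists a choice of such coefficients $c^{lm}_{ij}$, satisfying in addition that $c^{lp}_{ij}\neq0$ only if the set $\{i,j,l,p\}$ consists of exactly two distinct numbers, for which this system has an $n^2\times n^2$ nondegenerate minor; in particular, for this choice its only solution is $b^k_s=0$ for all $k,s$.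
   Context: This system is the compatibility condition $\partial_p(\mathcal{L}_{V_1}\Gamma_1)^l_{ij}=\partial_i(\mathcal{L}_{V_1}\Gamma_1)^l_{pj}$ for a linear vector field $V_1^k=\sum_s b^k_sx^s$ and a connection with Christoffel symbols $\Gamma^l_{ij}=\sum_m c^{lm}_{ij}x^m$, but the claim is purely about the stated linear system. *)

(* Defs.v *)
From HB Require Import structures.
From mathcomp Require Import all_boot all_order all_algebra.
From mathcomp Require Import reals.
Set Implicit Arguments. Unset Strict Implicit. Unset Printing Implicit Defensive.
Import Order.TTheory GRing.Theory Num.Theory.
Local Open Scope ring_scope.

(* Coefficients: [c l m i j] stands for c^{lm}_{ij}.
   Unknowns: [B : 'M[R]_n], with [B k s] standing for b^k_s. *)

Definition lie_eqn {R : realType} {n : nat}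
    (c : 'I_n -> 'I_n -> 'I_n -> 'I_n -> R) (i p j l : 'I_n) (B : 'M[R]_n) : R :=
  \sum_(k < n)
    ( (c l k i j - c l i k j) * B k p
    + (c l p k j - c l k p j) * B k i
    + (c k i p j - c k p i j) * B l k
    + (c l p i k - c l i p k) * B k j ).

(* The coefficient of the unknown number q (unknowns b^k_s enumerated as the
   entries of the n x n matrix via mxvec) in the equation (i,p,j,l). *)
Definition lie_coef {R : realType} {n : nat}
    (c : 'I_n -> 'I_n -> 'I_n -> 'I_n -> R) (i p j l : 'I_n) (q : 'I_(n * n)) : R :=
  lie_eqn c i p j l (vec_mx (delta_mx 0 q)).

(* Main.v *)
Require Import Defs.
From HB Require Import structures.
From mathcomp Require Import all_boot all_order all_algebra.
From mathcomp Require Import reals.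
From mathcomp Require Import ring lra zify.
Import Order.TTheory GRing.Theory Num.Theory.
Local Open Scope ring_scope.

Section Aux.
Variable R : realType.
Variable n : nat.
Implicit Types (c : 'I_n -> 'I_n -> 'I_n -> 'I_n -> R) (B : 'M[R]_n).

Lemma lie_eqnD c i p j l B1 B2 :
  lie_eqn c i p j l (B1 + B2) = lie_eqn c i p j l B1 + lie_eqn c i p j l B2.
Proof. rewrite /lie_eqn -big_split; apply: eq_bigr => k _; rewrite !mxE /=; ring. Qed.

Lemma lie_eqn0 c i p j l : lie_eqn c i p j l 0 = 0.
Proof. rewrite /lie_eqn big1 // => k _; rewrite !mxE /=; ring. Qed.

Lemma lie_eqnZ c i p j l a B :
  lie_eqn c i p j l (a *: B) = a * lie_eqn c i p j l B.
Proof. rewrite /lie_eqn mulr_sumr; apply: eq_bigr => k _; rewrite !mxE /=; ring. Qed.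

Lemma lie_eqn_vec c i p j l (v : 'rV[R]_(n * n)) :
  lie_eqn c i p j l (vec_mx v) = \sum_q v 0 q * lie_coef c i p j l q.
Proof.
have -> : vec_mx v = \sum_q v 0 q *: vec_mx (delta_mx 0 q).
  rewrite {1}(matrix_sum_delta v) big_ord1 linear_sum; apply: eq_bigr => q _.
  by rewrite linearZ.
rewrite (big_morph _ (lie_eqnD c i p j l) (lie_eqn0 c i p j l)).
by apply: eq_bigr => q _; rewrite lie_eqnZ.
Qed.

Definition cc (l m i j : 'I_n) : R := ((l == i) && (l == j) && (m != l))%:R.

End Aux.

Ltac simp_neq := repeat match goal with
 | H : is_true (?x != ?y) |- context [?x == ?y] => rewrite (negbTE H)
 | H : is_true (?x != ?y) |- context [?y == ?x] => rewrite [y == x]eq_sym (negbTE H)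
end.

Section Eqs.
Variable R : realType.
Variable n : nat.
Implicit Types (B : 'M[R]_n).

Lemma eqA (a b : 'I_n) B : a != b -> lie_eqn (@cc R n) a b b a B = 2 * B a b.
Proof.
move=> ab; rewrite /lie_eqn (bigD1 a) //= (bigD1 b) /=; last by rewrite eq_sym.
rewrite big1 => [|k /andP[kb ka]]; rewrite /cc ?eqxx; simp_neq => /=; ring.
Qed.

Lemma eqB (s k : 'I_n) B : s != k -> lie_eqn (@cc R n) s k s k B = - (2 * B k s).
Proof.
move=> sk; rewrite /lie_eqn (bigD1 s) //= (bigD1 k) /=; last by rewrite eq_sym.
rewrite big1 => [|m /andP[mk ms]]; rewrite /cc ?eqxx; simp_neq => /=; ring.
Qed.

Lemma eqC (i p : 'I_n) B : i != p -> (forall k, k != p -> B k p = 0) ->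
  lie_eqn (@cc R n) i p i i B = B p p + B i i.
Proof.
move=> ip Hoff; rewrite /lie_eqn (bigD1 i) //= (bigD1 p) /=; last by rewrite eq_sym.
rewrite big1 => [|k /andP[ki kp]]; rewrite /cc ?eqxx; simp_neq => /=.
  rewrite (Hoff i ip); ring.
rewrite (Hoff k kp); ring.
Qed.

End Eqs.

Section Core.
Variable R : realType.
Variable m : nat.
Local Notation N := m.+3.

Definition ri' (k s : 'I_N) : 'I_N :=
  if k == s then (if k == ord0 then inord 1 else ord0) else (if (k < s)%N then k else s).
Definition rp' (k s : 'I_N) : 'I_N :=
  if k == s then (if k == ord0 then inord 2 else k) else (if (k < s)%N then s else k).
Definition rj' (k s : 'I_N) : 'I_N := if k == s then ri' k s else s.
Definition rl' (k s : 'I_N) : 'I_N := if k == s then ri' k s else k.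

Lemma ri_lt (k s : 'I_N) : (ri' k s < rp' k s)%N.
Proof.
rewrite /ri' /rp'; have [_|ks] := eqVneq k s.
  have [_|k0] := eqVneq k ord0; first by rewrite !inordK.
  by rewrite lt0n; apply: contra k0 => /eqP k0; apply/eqP/val_inj.
case: (ltnP k s) => // sk; rewrite ltn_neqAle sk andbT.
by apply: contra ks => /eqP sk'; apply/eqP/val_inj.
Qed.

Lemma core (B : 'M[R]_N) :
  (forall k s, lie_eqn (@cc R N) (ri' k s) (rp' k s) (rj' k s) (rl' k s) B = 0) ->
  B = 0.
Proof.
move=> H.
have off : forall k s, k != s -> B k s = 0.
  move=> k s ks; have := H k s; rewrite /ri' /rp' /rj' /rl' (negbTE ks).
  case: (ltnP k s) => _.
    by rewrite eqA // => h; lra.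
  by rewrite eqB ?(eq_sym s) // => h; lra.
have diag : forall i p, i != p -> lie_eqn (@cc R N) i p i i B = B p p + B i i.
  by move=> i p ip; rewrite eqC // => k; exact: off.
have h0 : B (inord 2) (inord 2) + B (inord 1) (inord 1) = 0.
  have := H ord0 ord0; rewrite /ri' /rp' /rj' /rl' !eqxx diag //.
  by rewrite -(inj_eq val_inj) /= !inordK.
have hk : forall k, k != ord0 -> B k k + B ord0 ord0 = 0.
  move=> k k0; have := H k k; rewrite /rj' /rl' /ri' /rp' !eqxx (negbTE k0).
  by rewrite diag // eq_sym.
have b00 : B ord0 ord0 = 0.
  have h1 := hk (inord 1) (_ : _); have h2 := hk (inord 2) (_ : _).
  suff [e1 e2] : (inord 1 : 'I_N) != ord0 /\ (inord 2 : 'I_N) != ord0.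
    move: (h1 e1) (h2 e2) h0 => a1 a2 a0; lra.
  by split; rewrite -(inj_eq val_inj) /= !inordK.
apply/matrixP => k s; rewrite mxE.
have [<-|ks] := eqVneq k s; last exact: off.
have [->|k0] := eqVneq k ord0; first exact: b00.
by have := hk k k0; rewrite b00 addr0.
Qed.

End Core.

Theorem mainTheorem3 (R : realType) (n : nat) (hn : (3 <= n)%N) :
  exists c : 'I_n -> 'I_n -> 'I_n -> 'I_n -> R,
    (forall l m i j, c l m i j = c l m j i) /\
    (forall l p i j, c l p i j != 0 -> #|[set i; j; l; p]| = 2%N) /\
    (* an n^2 x n^2 nondegenerate minor of the coefficient matrix:
       n^2 selected equations (ri a, rp a, rj a, rl a) with ri a < rp a *)
    (exists ri rp rj rl : 'I_(n * n) -> 'I_n,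
        (forall a, (ri a < rp a)%N) /\
        \det (\matrix_(a < n * n, q < n * n) lie_coef c (ri a) (rp a) (rj a) (rl a) q)
          != 0) /\
    (* in particular the only solution is the trivial one *)
    (forall B : 'M[R]_n,
        (forall i p j l : 'I_n, (i < p)%N -> lie_eqn c i p j l B = 0) -> B = 0).
Proof.
case: n hn => [|[|[|m]]] // _.
exists (@cc R m.+3); split.
  by move=> l m' i j; rewrite /cc (andbC (l == i)).
split.
  move=> l p i j; rewrite /cc pnatr_eq0 eqb0 negbK.
  case/andP => /andP[/eqP <- /eqP <-] pl.
  have -> : [set l; l; l; p] = [set l; p].
    by apply/setP => x; rewrite !inE; case: (x == l).
  by rewrite cards2 eq_sym pl.
pose K (a : 'I_(m.+3 * m.+3)) : 'I_m.+3 := inord (a %/ m.+3).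
pose S (a : 'I_(m.+3 * m.+3)) : 'I_m.+3 := inord (a %% m.+3).
have sel : forall (k s : 'I_m.+3), exists a, K a = k /\ S a = s.
  move=> k s.
  have lt : (k * m.+3 + s < m.+3 * m.+3)%N.
    have := ltn_ord k; have := ltn_ord s; nia.
  exists (Ordinal lt); rewrite /K /S /=.
  by rewrite divnMDl // divn_small // addn0 modnMDl modn_small // !inord_val.
split.
  exists (fun a => ri' m (K a) (S a)), (fun a => rp' m (K a) (S a)),
         (fun a => rj' m (K a) (S a)), (fun a => rl' m (K a) (S a)).
  split; first by move=> a; exact: (@ri_lt m (K a) (S a)).
  apply/negP; rewrite -det_tr => /det0P [v nv vM].
  have HB : vec_mx v = 0.
    apply: core => k s; have [a [<- <-]] := sel k s.
    have /rowP/(_ a) h := vM; rewrite !mxE in h; rewrite lie_eqn_vec; apply: (etrans _ h).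
    by apply: eq_bigr => q _; rewrite !mxE.
  by move: nv; rewrite -(vec_mxK v) HB linear0 eqxx.
move=> B HB; apply: core => k s; apply: HB; exact: (@ri_lt m k s).
Qed.
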